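(* Let $X$ be an infinite compact metrizable space and $h\colon X\to X$ a minimal homeomorphism. (1) If $(X,h)$ has the topological small boundary property, then for every compact $F\subset X$ there is an open set $U\subset X$ with $F\subset U$ and $\partial U$ topologically $h$-small. (2) $(X,h)$ has the topological small boundary property if and only if for every $x\in X$ and every open neighborhood $U$ of $x$ there is an open neighborhood $V$ of $x$ with $V\subset\overline{V}\subset U$ and $\partial V$ topologically $h$-small.
   Context: $\partial A$ is the boundary of $A$. A closed set $F\subset X$ is topologically $h$-small if there is $m\in\mathbb{Z}_{+}$ such that whenever $d(0),\dots,d(m)$ are $m+1$ distinct integers, $h^{d(0)}(F)\cap\cdots\cap h^{d(m)}(F)=\varnothing$. $(X,h)$ has the topological small boundary property if whenever $F,K\subset X$ are disjoint compact sets, there exist open sets $U,V\subset X$ with $F\subset U$, $K\subset V$, $\overline{U}\cap\overline{V}=\varnothing$ and $\partial U$ topologically $h$-small. *)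

(* Defs.v *)
From HB Require Import structures.
From mathcomp Require Import all_boot all_order all_algebra.
From mathcomp Require Import all_classical all_reals all_analysis.
Set Implicit Arguments. Unset Strict Implicit. Unset Printing Implicit Defensive.
Import Order.TTheory GRing.Theory Num.Theory.
Local Open Scope classical_set_scope.

Definition boundary {T : topologicalType} (A : set T) : set T :=
  closure A `\` interior A.

(* h^d for d : int, given h with inverse g (h^-1 = g) *)
Definition zpow {T : Type} (h g : T -> T) (d : int) : T -> T :=
  match d with
  | Posz n => iter n h
  | Negz n => iter n.+1 g
  end.

Definition homeomorphism {T : topologicalType} (h g : T -> T) : Prop :=
  continuous h /\ continuous g /\ cancel h g /\ cancel g h.

Definition minimal_homeo {T : topologicalType} (h : T -> T) : Prop :=
  forall Y : set T, closed Y -> h @` Y = Y -> Y = set0 \/ Y = setT.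

Definition top_small {T : topologicalType} (h g : T -> T) (F : set T) : Prop :=
  closed F /\
  exists m : nat, forall d : 'I_m.+1 -> int, injective d ->
    \bigcap_(i in [set: 'I_m.+1]) (zpow h g (d i) @` F) = set0.

Definition tsbp {T : topologicalType} (h g : T -> T) : Prop :=
  forall F K : set T, compact F -> compact K -> F `&` K = set0 ->
    exists U V : set T, [/\ open U /\ open V, F `<=` U, K `<=` V,
      closure U `&` closure V = set0 & top_small h g (boundary U)].

(* Main.v *)
Require Import Defs.
From HB Require Import structures.
From mathcomp Require Import all_boot all_order all_algebra.
From mathcomp Require Import all_classical all_reals all_analysis.
Import Order.TTheory GRing.Theory Num.Theory.
Local Open Scope classical_set_scope.

Definition pt_of {T : topologicalType} (x0 : T) : Type := T.
HB.instance Definition _ (T : topologicalType) (x0 : T) :=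
  Topological.copy (pt_of x0) T.
HB.instance Definition _ (T : topologicalType) (x0 : T) :=
  isPointed.Build (pt_of x0) x0.

Section Aux.
Variable (X : topologicalType) (h g : X -> X).

Definition csmall (B : set X) (m : nat) :=
  forall y (s : seq int), uniq s ->
    (forall d, d \in s -> (zpow h g d @` B) y) -> (size s <= m)%N.

Lemma small_of_top B : top_small h g B -> exists m, csmall B m.
Proof.
move=> [_ [m Hm]]; exists m => y s us Hs.
rewrite leqNgt; apply/negP => Hsz.
pose d := fun i : 'I_m.+1 => nth 0%R s i.
have dinj : injective d.
  move=> i j; rewrite /d => /eqP; rewrite nth_uniq //.
  - by move/eqP/val_inj.
  - exact: leq_trans (ltn_ord i) Hsz.
  - exact: leq_trans (ltn_ord j) Hsz.
have := Hm d dinj; rewrite -subset0 => /(_ y); apply => i _.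
apply: Hs; apply: mem_nth; exact: leq_trans (ltn_ord i) Hsz.
Qed.

Lemma top_of_small B m : closed B -> csmall B m -> top_small h g B.
Proof.
move=> cB Hm; split => //; exists m => d dinj.
apply/seteqP; split => // y Hy.
have := Hm y (map d (enum 'I_m.+1)).
rewrite map_inj_uniq // enum_uniq size_map size_enum_ord ltnn.
move=> H; exfalso; suff : false by [].
apply: H => // d0 /mapP [i _ ->]; exact: Hy.
Qed.

Lemma csmallU A B ma mb : csmall A ma -> csmall B mb -> csmall (A `|` B) (ma + mb).
Proof.
move=> HA HB y s us Hs.
pose p := fun d : int => `[< (zpow h g d @` A) y >].
rewrite -(count_predC p s) -!size_filter.
apply: leq_add.
- apply: (HA y); first exact: filter_uniq.
  by move=> d; rewrite mem_filter => /andP[/asboolP].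
- apply: (HB y); first exact: filter_uniq.
  move=> d; rewrite mem_filter => /andP[/= /asboolPn nA ds].
  have [x [Ax|Bx] Ex] := Hs d ds; last by exists x.
  by exfalso; apply: nA; exists x.
Qed.

Lemma csmallS A B m : B `<=` A -> csmall A m -> csmall B m.
Proof.
move=> BA HA y s us Hs; apply: (HA y s us) => d ds.
by have [x Bx <-] := Hs d ds; exists x => //; apply: BA.
Qed.

Lemma csmall0 : csmall set0 0.
Proof.
move=> y [|d s] //= _ Hs.
by have [x [] ] := Hs d (mem_head _ _).
Qed.

Lemma boundary_closed (A : set X) : closed (boundary A).
Proof.
rewrite /boundary setDE; apply: closedI; first exact: closed_closure.
apply: open_closedC; exact: open_interior.
Qed.

Lemma boundaryU (A B : set X) : boundary (A `|` B) `<=` boundary A `|` boundary B.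
Proof.
move=> x [].
rewrite closureU => -[cA|cB] nI.
- by left; split => // iA; apply: nI; apply: interiorU; left.
- by right; split => // iB; apply: nI; apply: interiorU; right.
Qed.

Definition goodset (K : set X) (V : set X) :=
  [/\ open V, closure V `&` K = set0 & exists m, csmall (boundary V) m].

Lemma good0 K : goodset K set0.
Proof.
split; first exact: open0.
- by rewrite closure0 set0I.
- exists 0%N; apply: csmallS csmall0.
  by rewrite /boundary closure0 set0D.
Qed.

Lemma goodU K A B : goodset K A -> goodset K B -> goodset K (A `|` B).
Proof.
move=> [oA cA [ma sA]] [oB cB [mb sB]]; split.
- exact: openU.
- by rewrite closureU setIUl cA cB setU0.
- exists (ma + mb)%N; apply: csmallS (boundaryU A B) _; exact: csmallU.
Qed.

Lemma main_sep (F K : set X) :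
  (forall (x : X) (U : set X), open U -> U x ->
       exists V : set X, [/\ open V, V x, V `<=` closure V, closure V `<=` U
                           & top_small h g (boundary V)]) ->
  compact F -> closed K -> F `&` K = set0 ->
  exists U, F `<=` U /\ goodset K U.
Proof.
move=> Hloc cF cK FK.
have : forall x, exists V, goodset K V /\ (F x -> V x).
  move=> x; have [Fx|nFx] := pselect (F x); last first.
    by exists set0; split => //; exact: good0.
  have nKx : (~` K) x by move=> Kx; have : (F `&` K) x by []; rewrite FK.
  have [V [oV Vx _ cVK tV]] := Hloc x (~` K) (closed_openC cK) nKx.
  exists V; split => //; split => //.
  - by apply/seteqP; split => // y [/cVK].
  - exact: small_of_top.
move=> /choice [W HW].
have [[x0 Fx0]|F0] := pselect (exists x, F x); last first.
  exists set0; split; last exact: good0.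
  by move=> x Fx; apply: F0; exists x.
have cc : @cover_compact (pt_of x0) F.
  have : @compact (pt_of x0) F by [].
  by rewrite compact_cover.
have := cc X F W.
case.
- by move=> i _; have [[]] := HW i.
- by move=> x Fx; exists x => //; have [_] := HW x; apply.
move=> D' sub cov.
have gen : forall s : seq X, goodset K (foldr (fun i acc => W i `|` acc) set0 s).
  elim => [|i s IH] /=; first exact: good0.
  by apply: goodU => //; have [] := HW i.
exists (foldr (fun i acc => W i `|` acc) set0 (finmap.enum_fset D')); split; last exact: gen.
move=> x /cov [i Di Wix].
have : i \in (finmap.enum_fset D') by [].
elim: (finmap.enum_fset D') => [|j s IH] //=.
rewrite in_cons => /orP [/eqP <-|/IH]; first by left.
by right.
Qed.

End Aux.

Theorem lemma4p3 (R : realType) (X : pseudoMetricType R) (h g : X -> X) :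
  hausdorff_space X -> compact [set: X] -> ~ finite_set [set: X] ->
  homeomorphism h g -> minimal_homeo h ->
  (tsbp h g ->
     forall F : set X, compact F ->
       exists U : set X, [/\ open U, F `<=` U & top_small h g (boundary U)])
  /\
  (tsbp h g <->
     forall (x : X) (U : set X), open U -> U x ->
       exists V : set X, [/\ open V, V x, V `<=` closure V, closure V `<=` U
                           & top_small h g (boundary V)]).
Proof.
move=> hX cX _ _ _; split.
  move=> ts F cF.
  have [U [V [[oU _] FU _ _ tU]]] := ts F set0 cF compact0 (setI0 F).
  by exists U; split.
split.
  move=> ts x U oU Ux.
  have cK : compact (~` U).
    by rewrite -(setTI (~` U)); apply: compact_closedI => //; exact: open_closedC.
  have dj : [set x] `&` ~` U = set0.
    by apply/seteqP; split => // y [-> ].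
  have [U' [V' [[oU' oV'] xU' KV' cUV tU']]] := ts [set x] _ (@compact_set1 _ x) cK dj.
  exists U'; split => //; first by apply: xU'.
  - exact: subset_closure.
  - move=> y cy; apply: contrapT => nUy.
    have : (closure U' `&` closure V') y by split => //; apply: subset_closure; apply: KV'.
    by rewrite cUV.
move=> Hloc F K cF cK FK.
have [U [FU [oU cUK [m sU]]]] := @main_sep X h g _ _ Hloc cF (compact_closed hX cK) FK.
have ccU : compact (closure U).
  by rewrite -(setTI (closure U)); apply: compact_closedI => //; exact: closed_closure.
have KcU : K `&` closure U = set0 by rewrite setIC.
have [V [KV [oV cVU _]]] := @main_sep X h g _ _ Hloc cK (@closed_closure _ U) KcU.
exists U, V; split => //.
- by rewrite setIC.
- exact: (@top_of_small X h g _ m (@boundary_closed X U) sU).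
Qed.
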